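(* A sequence $a=(a_1,\dots,a_d)\in\mathbb{R}^d$ is a Nuij sequence with a universal determinantal representation if and only if there exist $\alpha,\beta\in\mathbb{R}$ such that $$a_i=\frac{1}{i!}\,t_{\alpha,\beta}(i)=\frac{1}{i!}(\alpha-\beta)^{i-1}\big(\alpha+(i-1)\beta\big),\qquad i=1,\dots,d.$$
   Context: A polynomial in $\mathbb{R}[z]$ is hyperbolic if all its roots are real. A sequence $a\in\mathbb{R}^d$ is a Nuij sequence if for every hyperbolic $p\in\mathbb{R}[z]$ of degree $d$, $p_a(z,s):=p(z)+\sum_{k=1}^d a_k s^k p^{(k)}(z)$ is hyperbolic for all $s\in\mathbb{R}$. A Nuij sequence $a$ admits a universal determinantal representation if there exists a real symmetric $d\times d$ matrix $A_a$ such that for every monic hyperbolic polynomial $p(z)=(z+\lambda_1)\cdots(z+\lambda_d)$ of degree $d$ one has $p_a(z,s)=\det(zI+D+sA_a)$, where $D$ is the diagonal matrix with diagonal entries $\lambda_1,\dots,\lambda_d$ in an arbitrary order. For $\alpha,\beta\in\mathbb{R}$ and $i\ge1$, $t_{\alpha,\beta}(i)$ denotes the determinant of the $i\times i$ matrix with all diagonal entries $\alpha$ and all off-diagonal entries $\beta$, which equals $(\alpha-\beta)^{i-1}(\alpha+(i-1)\beta)$. *)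

(* Defs.v *)
From HB Require Import structures.
From mathcomp Require Import all_boot all_order all_algebra.
From mathcomp Require Import reals.
From mathcomp.real_closed Require Import complex.
Set Implicit Arguments. Unset Strict Implicit. Unset Printing Implicit Defensive.
Import Order.TTheory GRing.Theory Num.Theory.
Local Open Scope ring_scope.

Definition hyperbolic (R : realType) (p : {poly R}) : Prop :=
  p != 0 /\
  forall z : R[i], root (map_poly (fun x : R => Complex x 0) p) z -> z \is Num.real.

(* p_a(z,s) = p(z) + sum_{k=1}^d a_k s^k p^(k)(z), as a polynomial in z for fixed s;
   a : 'I_d -> R with a_k := a (k-1). *)
Definition p_a (R : realType) (d : nat) (a : 'I_d -> R) (p : {poly R}) (s : R)
  : {poly R} :=
  p + \sum_(i < d) (a i * s ^+ i.+1) *: p^`(i.+1).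

Definition nuij_seq (R : realType) (d : nat) (a : 'I_d -> R) : Prop :=
  forall p : {poly R}, hyperbolic p -> (size p).-1 = d ->
    forall s : R, hyperbolic (p_a a p s).

(* universal determinantal representation: one real symmetric A such that for
   every monic hyperbolic p = prod (z + lambda_i) (lambda in any order),
   p_a(z,s) = det(zI + D + sA). *)
Definition univ_det_rep (R : realType) (d : nat) (a : 'I_d -> R) : Prop :=
  exists A : 'M[R]_d, A^T = A /\
    forall (lam : 'I_d -> R) (s : R),
      p_a a (\prod_(i < d) ('X + (lam i)%:P)) s =
      \det ('X%:M + map_mx polyC (diag_mx (\row_i lam i) + s *: A)).

Definition t_ab (R : realType) (alpha beta : R) (i : nat) : R :=
  \det (\matrix_(j < i, k < i) (if j == k then alpha else beta)).

(* Main.v *)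
Require Import Defs.
From HB Require Import structures.
From mathcomp Require Import all_boot all_order all_algebra.
From mathcomp Require Import fingroup perm.
From mathcomp Require Import ring lra.
From mathcomp Require Import reals.
From mathcomp.real_closed Require Import complex.
Import Order.TTheory GRing.Theory Num.Theory.
Local Open Scope ring_scope.
Set Implicit Arguments. Unset Strict Implicit. Unset Printing Implicit Defensive.
Section LA.
Variable R : comNzRingType.

Definition pm n (S : {set 'I_n}) (M : 'M[R]_n) : 'M[R]_n :=
  \matrix_(i, j) (if i \in S then M i j else (i == j)%:R).

Lemma det_sum_rows n (U V : 'M[R]_n) :
  \det (U + V) = \sum_(J : {set 'I_n})
     \det (\matrix_(i, j) (if i \in J then U i j else V i j)).
Proof.
rewrite /determinant.
under eq_bigr => s _.
  rewrite (eq_bigr (fun i => U i (s i) + V i (s i))); last by move=> i _; rewrite mxE.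
  rewrite bigA_distr /= big_distrr /=.
over.
rewrite exchange_big /=; apply: eq_bigr => J _; apply: eq_bigr => s _.
by congr (_ * _); apply: eq_bigr => i _; rewrite mxE.
Qed.

Lemma det_expand n (x : 'I_n -> R) (M : 'M[R]_n) :
  \det (diag_mx (\row_j x j) + M) =
  \sum_(S : {set 'I_n}) (\prod_(j in ~: S) x j) * \det (pm S M).
Proof.
rewrite addrC det_sum_rows; apply: eq_bigr => S _.
have -> : \matrix_(i, j) (if i \in S then M i j else diag_mx (\row_k x k) i j)
   = diag_mx (\row_j (if j \in S then 1 else x j)) *m pm S M.
  apply/matrixP => i j; rewrite mul_diag_mx !mxE.
  by case: (i \in S); rewrite ?mul1r // mulr_natr.
rewrite det_mulmx det_diag; congr (_ * _).
rewrite [RHS]big_mkcond; apply: eq_bigr => i _; rewrite !mxE in_setC.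
by case: (i \in S).
Qed.

Lemma sylvester n k (U : 'M[R]_(n, k)) (V : 'M[R]_(k, n)) :
  \det (1%:M + U *m V) = \det (1%:M + V *m U).
Proof.
have e1 : block_mx 1%:M U (- V) 1%:M
   = block_mx 1%:M 0 (- V) 1%:M *m block_mx 1%:M U 0 (1%:M + V *m U).
  rewrite mulmx_block !mul1mx !mul0mx !mulmx1 ?mulmx0 !addr0 ?add0r mulNmx.
  by rewrite [1%:M + _]addrC addKr.
have e2 : block_mx 1%:M U (- V) 1%:M
   = block_mx (1%:M + U *m V) U 0 1%:M *m block_mx 1%:M 0 (- V) 1%:M.
  rewrite mulmx_block !mul1mx !mul0mx !mulmx1 ?mulmx0 ?addr0 ?add0r mulmxN.
  by rewrite addrK.
have := congr1 determinant e1; rewrite e2 !det_mulmx.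
rewrite (det_lblock (1%:M : 'M[R]_n)) (det_ublock (_ : 'M[R]_n)).
rewrite (det_ublock (1%:M : 'M[R]_n)) !det1 !mul1r !mulr1 => ->.
by [].
Qed.

Lemma det_pm_sub n k (f : 'I_k -> 'I_n) (M : 'M[R]_n) : injective f ->
  \det (pm (f @: setT) M) = \det (\matrix_(l, m) M (f l) (f m)).
Proof.
move=> injf.
pose U : 'M[R]_(n, k) := \matrix_(i, l) (i == f l)%:R.
pose V : 'M[R]_(k, n) := \matrix_(l, j) (M (f l) j - (f l == j)%:R).
have -> : pm (f @: setT) M = 1%:M + U *m V.
  apply/matrixP => i j; rewrite !mxE.
  case: imsetP => [[l0 _ ->]|Hn].
    rewrite (bigD1 l0) //= big1 ?addr0; last first.
      by move=> l /negbTE nl; rewrite !mxE (inj_eq injf) eq_sym nl mul0r.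
    by rewrite !mxE eqxx mul1r addrC subrK.
  rewrite big1 ?addr0 //= => l _; rewrite !mxE.
  case: eqP => [e|_]; last by rewrite mul0r.
  by case: Hn; exists l.
have -> : \matrix_(l, m) M (f l) (f m) = 1%:M + V *m U.
  apply/matrixP => l m; rewrite !mxE.
  rewrite (bigD1 (f m)) //= big1 ?addr0; last first.
    by move=> j /negbTE nj; rewrite !mxE nj mulr0.
  by rewrite !mxE eqxx mulr1 (inj_eq injf) addrC subrK.
exact: sylvester.
Qed.

Lemma det2 (B : 'M[R]_2) : \det B = B 0 0 * B 1 1 - B 0 1 * B 1 0.
Proof.
rewrite (expand_det_row _ 0) !big_ord_recl big_ord0 addr0 /cofactor !det_mx11 !mxE /=.
rewrite expr0 mul1r expr1 mulN1r mulrN.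
by congr (B _ _ * B _ _ - B _ _ * B _ _); apply/val_inj.
Qed.

Lemma det3 (B : 'M[R]_3) : \det B =
  B 0 0 * (B 1 1 * B 2 2 - B 1 2 * B 2 1)
  - B 0 1 * (B 1 0 * B 2 2 - B 1 2 * B 2 0)
  + B 0 2 * (B 1 0 * B 2 1 - B 1 1 * B 2 0).
Proof.
rewrite (expand_det_row _ 0) !big_ord_recl big_ord0 addr0 /cofactor !det2 !mxE /=.
pose B' i j := B (inord i) (inord j).
have E : forall x y : 'I_3, B x y = B' (val x) (val y) by move=> x y; rewrite /B' !inord_val.
rewrite !E /= expr0 expr1 !mul1r mulN1r; ring.
Qed.
Lemma det_pm_scalar n (S : {set 'I_n}) (c : R) :
  \det (pm S (c%:M : 'M[R]_n)) = c ^+ #|S|.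
Proof.
have -> : pm S c%:M = diag_mx (\row_j (if j \in S then c else 1)).
  by apply/matrixP => i j; rewrite !mxE; case: (i \in S).
rewrite det_diag -prodr_const [RHS]big_mkcond; apply: eq_bigr => i _.
by rewrite mxE.
Qed.

Lemma det_pm_scale n (S : {set 'I_n}) (c : R) (M : 'M[R]_n) :
  \det (pm S (c *: M)) = c ^+ #|S| * \det (pm S M).
Proof.
have -> : pm S (c *: M) = diag_mx (\row_j (if j \in S then c else 1)) *m pm S M.
  apply/matrixP => i j; rewrite mul_diag_mx !mxE.
  by case: (i \in S); rewrite ?mul1r.
rewrite det_mulmx det_diag -prodr_const; congr (_ * _).
by rewrite [RHS]big_mkcond; apply: eq_bigr => i _; rewrite mxE.
Qed.

Lemma pm_enum n (S : {set 'I_n}) : S = (@enum_val _ (mem S)) @: setT.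
Proof.
apply/setP => x; apply/idP/imsetP => [xS|[i _ ->]]; last exact: enum_valP.
by exists (enum_rank_in xS x); rewrite ?in_setT // enum_rankK_in.
Qed.

End LA.
Section LF.
Variable F : fieldType.

Definition Tm n (al be : F) : 'M[F]_n := \matrix_(i, j) (if i == j then al else be).

Lemma det_Tm k al be : \det (Tm k.+1 al be) = (al - be) ^+ k * (al + k%:R * be).
Proof.
have [->|neq] := eqVneq al be.
  case: k => [|k].
    by rewrite det_mx11 !mxE /= expr0 mul1r mul0r addr0.
  rewrite subrr expr0n /= mul0r.
  apply: (determinant_alternate (i1 := 0) (i2 := 1)) => // j.
  by rewrite !mxE; case: ifP; case: ifP.
have nz : al - be != 0 by rewrite subr_eq0.
pose U : 'M[F]_(k.+1, 1) := const_mx 1.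
pose V : 'M[F]_(1, k.+1) := const_mx (be / (al - be)).
have -> : Tm k.+1 al be = (al - be) *: (1%:M + U *m V).
  apply/matrixP => i j; rewrite !mxE big_ord1 !mxE mul1r.
  case: eqP => _; rewrite /=; field; exact: nz.
rewrite detZ sylvester det_mx11 !mxE.
under eq_bigr do rewrite !mxE mulr1.
rewrite sumr_const card_ord exprSr -mulrA; congr (_ * _).
rewrite eqxx /= mulrSr -[_ *+ k]mulr_natr; field; exact: nz.
Qed.
Lemma det_switch k (T : 'M[F]_k) (dl : 'I_k -> F) :
  (forall l, dl l ^+ 2 = 1) ->
  \det (\matrix_(l, m) (dl l * T l m * dl m)) = \det T.
Proof.
move=> hd.
have -> : \matrix_(l, m) (dl l * T l m * dl m)
    = diag_mx (\row_l dl l) *m T *m diag_mx (\row_l dl l).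
  by apply/matrixP => l m; rewrite mul_mx_diag mul_diag_mx !mxE.
rewrite !det_mulmx det_diag mulrC mulrA -expr2 -prodrXl.
by rewrite big1 ?mul1r // => i _; rewrite mxE hd.
Qed.

Lemma det_pm_Tm n (S : {set 'I_n}) al be :
  \det (pm S (Tm n al be)) = \det (Tm #|S| al be).
Proof.
rewrite {1}(pm_enum S) det_pm_sub; last exact: enum_val_inj.
by congr determinant; apply/matrixP => l m; rewrite !mxE (inj_eq enum_val_inj).
Qed.

Lemma det_pm_switch n (A : 'M[F]_n) al be (dl : 'I_n -> F) :
  (forall i, A i i = al) -> (forall i, dl i ^+ 2 = 1) ->
  (forall i j, i != j -> A i j = be * dl i * dl j) ->
  forall S, \det (pm S A) = \det (Tm #|S| al be).
Proof.
move=> hdg hd hoff S.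
rewrite {1}(pm_enum S) det_pm_sub; last exact: enum_val_inj.
rewrite -(det_switch (Tm #|S| al be) (dl := fun l => dl (enum_val l))) //.
congr determinant; apply/matrixP => l m; rewrite !mxE.
have [->|nlm] := eqVneq l m.
  by rewrite hdg mulrC mulrA -expr2 hd mul1r.
rewrite hoff ?(inj_eq enum_val_inj) //; ring.
Qed.

End LF.
Section M1.
Variable R : realType.

Lemma poly_ext (p q : {poly R}) : (forall x, p.[x] = q.[x]) -> p = q.
Proof.
move=> E; apply/eqP; rewrite -subr_eq0; apply/negPn/negP => nz.
pose rs := [seq (i%:R : R) | i <- iota 0 (size (p - q))].
have h1 : all (root (p - q)) rs.
  by apply/allP => y /mapP [i _ ->]; rewrite /root hornerD hornerN E subrr.
have h2 : uniq rs.
  rewrite map_inj_uniq ?iota_uniq // => i j /eqP; rewrite eqr_nat => /eqP //.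
by have := max_poly_roots nz h1 h2; rewrite size_map size_iota ltnn.
Qed.

Lemma horner_detX n (N : 'M[R]_n) x :
  (\det ('X%:M + map_mx polyC N)).[x] = \det (x%:M + N).
Proof.
rewrite -horner_evalE -det_map_mx; congr determinant; apply/matrixP => i j.
rewrite !mxE; apply: etrans (horner_evalE x _) _.
by rewrite hornerD hornerMn hornerX hornerC.
Qed.

End M1.
Section M2.
Variable R : realType.

Lemma prodXa_det n (mu : 'I_n -> R) :
  \prod_(j < n) ('X + (mu j)%:P) = \det (diag_mx (\row_j (mu j)%:P) + 'X%:M).
Proof.
have -> : diag_mx (\row_j (mu j)%:P) + 'X%:M = diag_mx (\row_j ('X + (mu j)%:P)).
  apply/matrixP => i j; rewrite !mxE; case: eqP => _ /=; first by rewrite addrC.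
  by rewrite !mulr0n addr0.
by rewrite det_diag; apply: eq_bigr => i _; rewrite mxE.
Qed.

Lemma coef_prodXa n (mu : 'I_n -> R) k :
  (\prod_(j < n) ('X + (mu j)%:P))`_k =
  \sum_(S : {set 'I_n} | #|S| == k) \prod_(j in ~: S) mu j.
Proof.
rewrite prodXa_det det_expand coef_sum [RHS]big_mkcond /=.
apply: eq_bigr => S _; rewrite det_pm_scalar -rmorph_prod coefCM coefXn.
by rewrite eq_sym; case: eqP => _; rewrite ?mulr1 ?mulr0.
Qed.

End M2.
Section M3.
Variable R : realType.

Definition cN d (a : 'I_d -> R) (k : nat) : R :=
  if k is k'.+1 then k`!%:R * oapp a 0 (insub k') else 1.

Lemma p_a_horner0 d (a : 'I_d -> R) p s :
  (p_a a p s).[0] = \sum_(k < d.+1) cN a k * s ^+ k * p`_k.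
Proof.
rewrite /p_a hornerD horner_sum horner_coef0 big_ord_recl.
congr (_ + _); first by rewrite /= mulr1 mul1r.
apply: eq_bigr => i _.
rewrite hornerZ horner_coef0 coef_derivn addn0 ffactnn.
rewrite /= valK /= -mulr_natr; ring.
Qed.

Lemma p_a_prod0 d (a : 'I_d -> R) (mu : 'I_d -> R) s :
  (p_a a (\prod_(j < d) ('X + (mu j)%:P)) s).[0] =
  \sum_(S : {set 'I_d}) cN a #|S| * s ^+ #|S| * \prod_(j in ~: S) mu j.
Proof.
rewrite p_a_horner0.
under eq_bigr do rewrite coef_prodXa big_distrr.
rewrite (partition_big (fun S : {set 'I_d} => (inord #|S| : 'I_d.+1)) xpredT) //=.
apply: eq_bigr => k _; apply: eq_big => [S | S /eqP <-] //.
have hS : (#|S| < d.+1)%N by rewrite ltnS; apply: leq_trans (max_card _) _; rewrite card_ord.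
by rewrite -val_eqE /= inordK.
Qed.

End M3.
Section M4.
Variable R : realType.

Lemma multiaff0 n (c : {set 'I_n} -> R) :
  (forall mu : 'I_n -> R, \sum_(S : {set 'I_n}) c S * \prod_(j in ~: S) mu j = 0) ->
  forall S, c S = 0.
Proof.
move=> E.
have H : forall V : {set 'I_n}, \sum_(T : {set 'I_n} | T \subset V) c (~: T) = 0.
  move=> V; rewrite -[RHS](E (fun j => (j \in V)%:R)).
  rewrite [RHS](reindex_inj (@setC_inj _)) /= big_mkcond /=.
  apply: eq_bigr => T _; rewrite setCK.
  case: ifP => sub.
    by rewrite big1 ?mulr1 // => j jT; rewrite (subsetP sub j jT).
  have [j jT jV] : exists2 j, j \in T & j \notin V.
    by apply/exists_inP; rewrite -negb_forall_in; apply/negP => /forall_inP h;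
       move/negP: sub; apply; apply/subsetP => x /h.
  by rewrite (bigD1 j) //= (negbTE jV) mul0r mulr0.
suff K : forall m (T : {set 'I_n}), (#|T| < m)%N -> c (~: T) = 0.
  by move=> S; rewrite -(setCK S); apply: (K (#|~: S|).+1).
elim=> [//|m IH] T hT.
have := H T; rewrite (bigD1 T) //= big1 ?addr0 // => U /andP [UT nUT].
have UlT : (#|U| < #|T|)%N by apply: proper_card; rewrite properEneq nUT UT.
by apply: IH; apply: leq_trans UlT hT.
Qed.

End M4.
Section M5.
Variable R : realType.

Lemma scalar0M n : (0%:M : 'M[R]_n) = 0.
Proof. by apply/matrixP => i j; rewrite !mxE mul0rn. Qed.

Lemma univ_minors d (a : 'I_d -> R) (A : 'M[R]_d) :
  (forall lam s, p_a a (\prod_(i < d) ('X + (lam i)%:P)) s =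
     \det ('X%:M + map_mx polyC (diag_mx (\row_i lam i) + s *: A))) ->
  forall S, \det (pm S A) = cN a #|S|.
Proof.
move=> U S; apply/eqP; rewrite -subr_eq0; apply/eqP; move: S.
apply: (multiaff0 (c := fun S => \det (pm S A) - cN a #|S|)) => mu.
have := congr1 (horner^~ 0) (U mu 1).
rewrite horner_detX p_a_prod0 scalar0M add0r scale1r det_expand => E.
rewrite (eq_bigr (fun S => \prod_(j in ~: S) mu j * \det (pm S A)
                          - cN a #|S| * 1 ^+ #|S| * \prod_(j in ~: S) mu j)).
  by rewrite sumrB E subrr.
by move=> S _; rewrite expr1n mulr1 mulrBl mulrC.
Qed.

End M5.
Section M6.
Variable R : realType.

Definition f1 n (i : 'I_n) : 'I_1 -> 'I_n := fun _ => i.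
Definition f2 n (i j : 'I_n) : 'I_2 -> 'I_n :=
  fun l => if val l == 0%N then i else j.
Definition f3 n (i j k : 'I_n) : 'I_3 -> 'I_n :=
  fun l => if val l == 0%N then i else if val l == 1%N then j else k.

Lemma f1_inj n (i : 'I_n) : injective (f1 i).
Proof. by move=> x y _; rewrite (ord1 x) (ord1 y). Qed.

Lemma f2_inj n (i j : 'I_n) : i != j -> injective (f2 i j).
Proof.
move=> ij [[|[|[]//]] px] [[|[|[]//]] py] //=; rewrite /f2 /= => e;
  try (by apply: val_inj); by rewrite e eqxx in ij.
Qed.

Lemma f3_inj n (i j k : 'I_n) : i != j -> j != k -> i != k -> injective (f3 i j k).
Proof.
move=> ij jk ik [[|[|[|[]//]]] px] [[|[|[|[]//]]] py] //=; rewrite /f3 /= => e;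
  try (by apply: val_inj);
  by rewrite ?e eqxx in ij jk ik.
Qed.

Lemma card_img k n (f : 'I_k -> 'I_n) : injective f -> #|f @: setT| = k.
Proof. by move=> injf; rewrite card_imset // cardsT card_ord. Qed.

Variables (n : nat) (A : 'M[R]_n) (c : nat -> R).
Hypothesis hm : forall S, \det (pm S A) = c #|S|.

Lemma minor1 i : A i i = c 1.
Proof.
have := hm (f1 i @: setT); rewrite card_img ?det_pm_sub ?det_mx11 ?mxE //;
  exact: f1_inj.
Qed.

Lemma minor2 i j : i != j -> A i i * A j j - A i j * A j i = c 2.
Proof.
move=> ij; have := hm (f2 i j @: setT).
by rewrite card_img ?det_pm_sub ?det2 ?mxE //; apply: f2_inj.
Qed.

Lemma minor3 i j k : i != j -> j != k -> i != k ->
  A i i * (A j j * A k k - A j k * A k j)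
  - A i j * (A j i * A k k - A j k * A k i)
  + A i k * (A j i * A k j - A j j * A k i) = c 3.
Proof.
move=> ij jk ik; have := hm (f3 i j k @: setT).
by rewrite card_img ?det_pm_sub ?det3 ?mxE //; apply: f3_inj.
Qed.

End M6.
Section M7.
Variable R : realType.

Lemma switch_exists n (A : 'M[R]_n) b2 P :
  (forall i j, A j i = A i j) ->
  (forall i j, i != j -> A i j ^+ 2 = b2) ->
  (forall i j k, i != j -> j != k -> i != k -> A i j * A j k * A i k = P) ->
  exists be (dl : 'I_n -> R), (forall i, dl i ^+ 2 = 1) /\
     forall i j, i != j -> A i j = be * dl i * dl j.
Proof.
move=> hsym hsq htri.
have [b0|b0] := eqVneq b2 0.
  exists 0, (fun _ => 1); split => [i|i j ij]; first by rewrite expr1n.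
  by have := hsq i j ij; rewrite b0 => /eqP; rewrite sqrf_eq0 => /eqP ->; rewrite !mul0r.
case: n A hsym hsq htri => [|n'] A hsym hsq htri.
  by exists 0, (fun _ => 1); split => [[]|[]].
pose i0 := (ord0 : 'I_n'.+1).
pose ex3 := [exists i : 'I_n'.+1, exists j : 'I_n'.+1, exists k : 'I_n'.+1, [&& i != j, j != k & i != k]].
pose be := if ex3 then P / b2 else Num.sqrt b2.
have hbe1 : forall i j : 'I_n'.+1, i != j -> be ^+ 2 = b2.
  move=> i j ij; rewrite /be; case: ifP => [|_].
    case/existsP => x /existsP [y /existsP [z /and3P [xy yz xz]]].
    have eP := htri x y z xy yz xz.
    have e3 : P ^+ 2 = b2 ^+ 3.
      by rewrite -eP !exprMn (hsq _ _ xy) (hsq _ _ yz) (hsq _ _ xz); ring.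
    by rewrite expr_div_n e3; field.
  by rewrite sqr_sqrtr // -(hsq i j ij) sqr_ge0.
have hbe2 : forall i j k : 'I_n'.+1, i != j -> j != k -> i != k -> P = be * b2.
  move=> i j k ij jk ik; rewrite /be ifT ?divfK //.
  by apply/existsP; exists i; apply/existsP; exists j; apply/existsP; exists k;
    rewrite ij jk ik.
pose dl i := if i == i0 then 1 else A i0 i / be.
exists be, dl; split.
  move=> i; rewrite /dl; case: eqP => [_|/eqP ni]; first by rewrite expr1n.
  have hb := hbe1 _ _ ni.
  have nbe : be != 0 by apply: contra b0 => /eqP be0; rewrite -hb be0 expr0n.
  by rewrite expr_div_n hsym (hsq _ _ ni) hb divff.
move=> i j ij.
have hb := hbe1 _ _ ij.
have nbe : be != 0 by apply: contra b0 => /eqP be0; rewrite -hb be0 expr0n.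
rewrite /dl; case: (eqVneq i i0) => [ei|ni]; case: (eqVneq j i0) => [ej|nj].
- by rewrite ei ej eqxx in ij.
- by rewrite ei; field.
- by rewrite ej hsym; field.
have i0i : i0 != i by rewrite eq_sym.
have i0j : i0 != j by rewrite eq_sym.
have e := htri _ _ _ i0i ij i0j.
rewrite (hbe2 _ _ _ i0i ij i0j) in e.
have hx := hsq _ _ i0i; have hz := hsq _ _ i0j.
rewrite -hb in hx hz.
have nx : A i0 i != 0 by apply: contra nbe => /eqP x0; rewrite -sqrf_eq0 -hx x0 expr0n.
have nz : A i0 j != 0 by apply: contra nbe => /eqP x0; rewrite -sqrf_eq0 -hz x0 expr0n.
have hy : A i j = be * be ^+ 2 / (A i0 i * A i0 j).
  by rewrite -hb in e; rewrite -e; field; rewrite nx nz.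
have ix : (A i0 i)^-1 = A i0 i / be ^+ 2.
  by rewrite -hx; field.
have iz : (A i0 j)^-1 = A i0 j / be ^+ 2.
  by rewrite -hz; field.
rewrite hy invfM ix iz; field; exact: nbe.
Qed.

End M7.
Section M8.
Variable R : realType.

Lemma t_abE (al be : R) k : t_ab al be k = \det (Tm k al be).
Proof. by []. Qed.

Lemma cN_S d (a : 'I_d -> R) (i : 'I_d) : cN a i.+1 = (i.+1)`!%:R * a i.
Proof. by rewrite /cN valK. Qed.

Lemma a_from_cN d (a : 'I_d -> R) al be :
  (forall S : {set 'I_d}, cN a #|S| = \det (Tm #|S| al be)) ->
  forall i : 'I_d,
    a i = (i.+1)`!%:R^-1 * t_ab al be i.+1 /\
    a i = (i.+1)`!%:R^-1 * ((al - be) ^+ i * (al + i%:R * be)).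
Proof.
move=> H i.
have hf : injective (widen_ord (ltn_ord i)) by move=> x y /(congr1 val) /= /val_inj.
have := H (widen_ord (ltn_ord i) @: setT); rewrite card_img // cN_S => E.
have nf : (i.+1)`!%:R != 0 :> R by rewrite pnatr_eq0 -lt0n fact_gt0.
have ea : a i = (i.+1)`!%:R^-1 * t_ab al be i.+1 by rewrite t_abE -E mulKf.
by split => //; rewrite ea t_abE det_Tm.
Qed.

Lemma forward d (a : 'I_d -> R) : univ_det_rep a ->
  exists al be : R, forall i : 'I_d,
    a i = (i.+1)`!%:R^-1 * t_ab al be i.+1 /\
    a i = (i.+1)`!%:R^-1 * ((al - be) ^+ i * (al + i%:R * be)).
Proof.
case=> A [hT U].
have hm := univ_minors U.
have hsym : forall i j, A j i = A i j by move=> i j; rewrite -{1}hT mxE.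
pose al := cN a 1.
have hdg : forall i, A i i = al := minor1 hm.
pose b2 := al ^+ 2 - cN a 2.
have hsq : forall i j, i != j -> A i j ^+ 2 = b2.
  move=> i j ij; have := minor2 hm ij; rewrite !hdg (hsym i j) /b2 => <-; ring.
pose P := (cN a 3 - al ^+ 3 + 3%:R * al * b2) / 2%:R.
have htri : forall i j k, i != j -> j != k -> i != k -> A i j * A j k * A i k = P.
  move=> i j k ij jk ik; have := minor3 hm ij jk ik.
  rewrite !hdg (hsym i j) (hsym j k) (hsym i k) /P => <-.
  have -> : 3%:R * al * b2 = al * (A i j ^+ 2 + A j k ^+ 2 + A i k ^+ 2).
    by rewrite !hsq //; ring.
  by field.
have [be [dl [hd hoff]]] := switch_exists hsym hsq htri.
exists al, be; apply: a_from_cN => S.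
by rewrite -(hm S) (det_pm_switch hdg hd hoff).
Qed.

End M8.
Section M9.
Variable R : realType.

Lemma derivn_shift (p : {poly R}) x n :
  (p \Po ('X + x%:P))^`(n) = p^`(n) \Po ('X + x%:P).
Proof.
elim: n => [|n IH] //; rewrite !derivnS IH deriv_comp derivD derivX derivC addr0.
by rewrite mulr1.
Qed.

Lemma p_a_shift d (a : 'I_d -> R) p s x :
  (p_a a p s).[x] = (p_a a (p \Po ('X + x%:P)) s).[0].
Proof.
have -> : p_a a (p \Po ('X + x%:P)) s = p_a a p s \Po ('X + x%:P).
  rewrite /p_a comp_polyD; congr (_ + _).
  rewrite [RHS](big_morph (fun q => q \Po ('X + x%:P)) (fun u v => comp_polyD u v _)
    (comp_poly0 _)) /=.
  by apply: eq_bigr => i _; rewrite -!derivnS comp_polyZ derivn_shift.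
by rewrite horner_comp; congr (_.[_]); rewrite hornerD hornerX hornerC add0r.
Qed.

Lemma prod_shift d (lam : 'I_d -> R) x :
  (\prod_(j < d) ('X + (lam j)%:P)) \Po ('X + x%:P) =
  \prod_(j < d) ('X + (lam j + x)%:P).
Proof.
rewrite (big_morph (fun q => q \Po ('X + x%:P)) (fun u v => comp_polyM u v _)
    (rmorph1 (comp_poly ('X + x%:P)))) /=.
apply: eq_bigr => j _; rewrite comp_polyD comp_polyX comp_polyC polyCD.
by rewrite -addrA [x%:P + _]addrC.
Qed.

End M9.
Section M10.
Variable R : realType.

Lemma backward_univ d (a : 'I_d -> R) al be :
  (forall i : 'I_d, a i = (i.+1)`!%:R^-1 * t_ab al be i.+1) ->
  forall lam s, p_a a (\prod_(i < d) ('X + (lam i)%:P)) s =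
    \det ('X%:M + map_mx polyC (diag_mx (\row_i lam i) + s *: Tm d al be)).
Proof.
move=> ha lam s.
have hc : forall S : {set 'I_d}, cN a #|S| = \det (pm S (Tm d al be)).
  move=> S; rewrite det_pm_Tm.
  have hS : (#|S| <= d)%N by apply: leq_trans (max_card _) _; rewrite card_ord.
  case E: #|S| hS => [|k] hk; first by rewrite det_mx00.
  have -> : k = val (Ordinal hk) by [].
  by rewrite cN_S ha mulrA mulfV ?mul1r // pnatr_eq0 -lt0n fact_gt0.
apply: poly_ext => x.
rewrite p_a_shift prod_shift p_a_prod0 horner_detX.
have -> : x%:M + (diag_mx (\row_i lam i) + s *: Tm d al be)
    = diag_mx (\row_j (lam j + x)) + s *: Tm d al be.
  apply/matrixP => i j; rewrite !mxE; case: eqP => _ /=; ring.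
rewrite det_expand; apply: eq_bigr => S _; rewrite det_pm_scale -hc; ring.
Qed.

End M10.
Section N1.
Variable R : realType.
Local Notation fC := (real_complex R).

Lemma eig_real n (N : 'M[R]_n) (z : R[i]) (v : 'rV[R[i]]_n) :
  (forall i j, N j i = N i j) -> v != 0 ->
  v *m map_mx fC N = z *: v -> z \is Num.real.
Proof.
move=> hsym nv ev.
have ej : forall j, \sum_i v 0 i * fC (N i j) = z * v 0 j.
  move=> j; have := congr1 (fun A : 'rV_n => A 0 j) ev; rewrite /= !mxE => <-.
  by apply: eq_bigr => i _; rewrite mxE.
pose ss := \sum_j v 0 j * (v 0 j)^*.
pose q := \sum_j \sum_i v 0 i * fC (N i j) * (v 0 j)^*.
have qz : q = z * ss.
  rewrite /q /ss big_distrr; apply: eq_bigr => j _.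
  by rewrite -big_distrl /= ej mulrA.
have qr : q^* = q.
  rewrite /q rmorph_sum /=; under eq_bigr do rewrite rmorph_sum /=.
  rewrite exchange_big /=; apply: eq_bigr => i _; apply: eq_bigr => j _.
  rewrite !rmorphM /= conjCK hsym.
  have cr : forall x : R, (fC x)^* = fC x by move=> x; exact: conjc_real.
  by rewrite cr; ring.
have ss0 : 0 <= ss by apply: sumr_ge0 => j _; exact: mulcJ_ge0.
have ssn : ss != 0.
  apply: contra nv => /eqP s0; apply/eqP/rowP => j; rewrite mxE.
  have := psumr_eq0P (fun j _ => mulcJ_ge0 (v 0 j)) s0 (i := j) isT.
  by move/eqP; rewrite mulf_eq0 conjc_eq0 orbb => /eqP.
have -> : z = q / ss by rewrite qz mulfK.
apply: rpred_div; last exact: ger0_real.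
by rewrite CrealE qr.
Qed.

End N1.
Section N2.
Variable R : realType.
Local Notation fC := (real_complex R).

Lemma hyp_det n (N : 'M[R]_n) (c : R) :
  (forall i j, N j i = N i j) -> c != 0 ->
  hyperbolic (c *: \det ('X%:M + map_mx polyC N)).
Proof.
move=> hsym nc.
have -> : \det ('X%:M + map_mx polyC N) = char_poly (- N).
  by rewrite /char_poly /char_poly_mx map_mxN opprK.
split.
  by rewrite scaler_eq0 negb_or nc monic_neq0 // char_poly_monic.
move=> z.
have -> : map_poly (fun x : R => Complex x 0) (c *: char_poly (- N))
        = map_poly fC (c *: char_poly (- N)) by apply: eq_map_poly.
rewrite map_polyZ rootZ ?fmorph_eq0 // map_char_poly -eigenvalue_root_char.
case/eigenvalueP => v ev nv.
apply: (eig_real (N := - N)) ev => // i j.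
by rewrite !mxE hsym.
Qed.

End N2.
Section N3.
Variable R : realType.
Local Notation fC := (real_complex R).

Lemma hyp_factor n (p : {poly R}) : (size p).-1 = n -> hyperbolic p ->
  exists c (r : 'I_n -> R), c != 0 /\ p = c *: \prod_(i < n) ('X - (r i)%:P).
Proof.
elim: n p => [|n IH] p sp [p0 hr].
  have /size_poly1P [c nc ->] : size p == 1.
    by move: sp p0; rewrite -size_poly_eq0; case: (size p) => [|[]].
  exists c, (fun i : 'I_0 => 0).
  by split => //; rewrite big_ord0 -alg_polyC.
have hmap : map_poly (fun x : R => Complex x 0) =1 map_poly fC by apply: eq_map_poly.
have : size (map_poly fC p) != 1.
  by rewrite size_map_poly; move: sp; case: (size p) => [|[|]].
case/closed_rootP => z rz.
have /complex_realP [r zr] : z \is Num.real by apply: hr; rewrite hmap.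
move: rz; rewrite zr fmorph_root => /factor_theorem [q pq].
have q0 : q != 0 by apply: contra p0; rewrite pq => /eqP ->; rewrite mul0r.
have sq : (size q).-1 = n.
  move: sp; rewrite pq size_Mmonic ?monicXsubC // size_XsubC addn2 /=.
  by move=> ->.
have hq : hyperbolic q.
  split => // w; rewrite hmap => rw; apply: hr; rewrite hmap pq rmorphM rootM.
  by rewrite rw.
have [c [rr [nc eq]]] := IH q sq hq.
exists c, (fun i : 'I_n.+1 => oapp rr r (insub (val i))); split => //.
rewrite pq eq -scalerAl big_ord_recr /= insubF ?ltnn //=.
by congr (_ *: (_ * _)); apply: eq_bigr => i _; rewrite valK.
Qed.

Lemma p_aZ d (a : 'I_d -> R) c q s : p_a a (c *: q) s = c *: p_a a q s.
Proof.
rewrite /p_a scalerDr scaler_sumr; congr (_ + _); apply: eq_bigr => i _.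
by rewrite derivnZ !scalerA mulrC.
Qed.

Lemma backward_nuij d (a : 'I_d -> R) (A : 'M[R]_d) :
  (forall i j, A j i = A i j) ->
  (forall lam s, p_a a (\prod_(i < d) ('X + (lam i)%:P)) s =
    \det ('X%:M + map_mx polyC (diag_mx (\row_i lam i) + s *: A))) ->
  nuij_seq a.
Proof.
move=> hsym U p hp sp s.
have [c [r [nc ->]]] := hyp_factor sp hp.
have -> : \prod_(i < d) ('X - (r i)%:P) = \prod_(i < d) ('X + (- r i)%:P).
  by apply: eq_bigr => i _; rewrite polyCN.
rewrite p_aZ U; apply: hyp_det => // i j.
by rewrite !mxE hsym; case: (eqVneq i j) => [->|ij] //.
Qed.

End N3.
Theorem theoremB (R : realType) (d : nat) (a : 'I_d -> R) :
  (nuij_seq a /\ univ_det_rep a) <->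
  exists alpha beta : R, forall i : 'I_d,
    a i = (i.+1)`!%:R^-1 * t_ab alpha beta i.+1 /\
    a i = (i.+1)`!%:R^-1 * ((alpha - beta) ^+ i * (alpha + i%:R * beta)).
Proof.
split.
  by case=> _ hu; exact: forward hu.
case=> al [be H].
have ha : forall i, a i = (i.+1)`!%:R^-1 * t_ab al be i.+1 := fun i => (H i).1.
have U := backward_univ ha.
have hsym : forall i j, Tm d al be j i = Tm d al be i j.
  by move=> i j; rewrite !mxE eq_sym.
split; first exact: backward_nuij hsym U.
exists (Tm d al be); split; last exact: U.
by apply/matrixP => i j; rewrite !mxE eq_sym.
Qed.
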